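(* Let $G$ be the final graph of the uncoordinated construction (described in the context) on a set $P\subset\mathbb{R}^d$ of $n$ points with parameter $s>1$, let $\alpha$ be the aspect ratio of $P$, and let $\mathcal{W}=\{(P_i,Q_i)\}_{i=1}^m$ be the corresponding greedy WSPD, i.e. one pair $(B_r(p),B_r(q))$ with $r=|pq|/(2s+2)$ for each edge $pq$ of $G$. Then each point $x\in P$ belongs to $P_i\cup Q_i$ for at most $O(s^d\lg\alpha)$ indices $i$, where the implied constant depends only on $d$.
   Context: Fix $d\ge 1$; $|xy|$ is Euclidean distance; $\lg$ is logarithm base 2; $B_r(p)=\{x\in P:|px|\le r\}$. The aspect ratio is $\alpha=\max_{u,v\in P}|uv|/\min_{u\ne v\in P}|uv|$. Uncoordinated construction: start with the graph $G$ on vertex set $P$ with no edges. Every ordered pair $(p,q)$ of distinct points of $P$ is processed exactly once, in an arbitrary order, one at a time. When $(p,q)$ is processed, the edge $pq$ is added to $G$ unless $G$ currently contains an edge whose endpoints can be labeled $p',q'$ with $|pp'|\le |p'q'|/(2s+2)$ and $|qq'|\le |p'q'|/(2s+2)$. $G$ is the graph after all pairs are processed. *)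

(* Defs.v *)
From HB Require Import structures.
From mathcomp Require Import all_boot all_order all_algebra.
From mathcomp Require Import reals exp.
Set Implicit Arguments. Unset Strict Implicit. Unset Printing Implicit Defensive.
Import Order.TTheory GRing.Theory Num.Theory.
Local Open Scope ring_scope.

Section UncoordinatedWSPD.
Variables (R : realType) (d n : nat).
Implicit Types (P : 'I_n -> 'rV[R]_d) (s : R).

Definition edist (u v : 'rV[R]_d) : R :=
  Num.sqrt (\sum_(k < d) (u ord0 k - v ord0 k) ^+ 2).

Definition lg (x : R) : R := ln x / ln 2.

Definition maxdist P : R :=
  \big[Num.max/0]_(i < n) \big[Num.max/0]_(j < n) edist (P i) (P j).
Definition mindist P : R :=
  \big[Num.min/maxdist P]_(i < n) \big[Num.min/maxdist P]_(j < n | j != i)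
    edist (P i) (P j).
Definition aspect_ratio P : R := maxdist P / mindist P.

Definition all_ordered_pairs : seq ('I_n * 'I_n) :=
  [seq pq <- [seq (i, j) | i <- enum 'I_n, j <- enum 'I_n] | pq.1 != pq.2].

Definition blocks P s (e : 'I_n * 'I_n) (p q : 'I_n) : bool :=
  let c := edist (P e.1) (P e.2) / (2 * s + 2) in
  ((edist (P p) (P e.1) <= c) && (edist (P q) (P e.2) <= c)) ||
  ((edist (P p) (P e.2) <= c) && (edist (P q) (P e.1) <= c)).

Definition process P s (E : seq ('I_n * 'I_n)) (pq : 'I_n * 'I_n) :=
  if has (fun e => blocks P s e pq.1 pq.2) E then E else rcons E pq.

Definition uncoord_graph P s (ord : seq ('I_n * 'I_n)) : seq ('I_n * 'I_n) :=
  foldl (process P s) [::] ord.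

(* the greedy WSPD pair (B_r(p), B_r(q)), r = |pq|/(2s+2), of edge e = pq
   contains point x in P_i \cup Q_i *)
Definition in_wspd_pair P s (x : 'I_n) (e : 'I_n * 'I_n) : bool :=
  let r := edist (P e.1) (P e.2) / (2 * s + 2) in
  (edist (P x) (P e.1) <= r) || (edist (P x) (P e.2) <= r).

End UncoordinatedWSPD.

(* Main.v *)
Require Import Defs.
From HB Require Import structures.
From mathcomp Require Import all_boot all_order all_algebra.
From mathcomp Require Import reals exp lra ring.
Import Order.TTheory GRing.Theory Num.Theory.
Local Open Scope ring_scope.
Set Implicit Arguments. Unset Strict Implicit. Unset Printing Implicit Defensive.

Section Edist.
Variables (R : realType) (d : nat).
Implicit Types u v : 'rV[R]_d.

Lemma edist_ge0 u v : 0 <= edist u v.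
Proof. exact: sqrtr_ge0. Qed.

Lemma edistC u v : edist u v = edist v u.
Proof.
rewrite /edist; congr Num.sqrt; apply: eq_bigr => k _.
by rewrite -sqrrN opprB.
Qed.

Lemma coord_le u v k : `|u ord0 k - v ord0 k| <= edist u v.
Proof.
rewrite /edist -sqrtr_sqr; apply: ler_wsqrtr.
rewrite (bigD1 k) //= lerDl; apply: sumr_ge0 => i _; exact: sqr_ge0.
Qed.

Lemma edist_le_cell u v (h : R) : 0 <= h ->
  (forall k, `|u ord0 k - v ord0 k| <= h) -> edist u v <= d%:R * h.
Proof.
move=> h0 Hk; rewrite /edist.
have Hd : 0 <= d%:R * h by rewrite mulr_ge0.
rewrite -(ger0_norm Hd) -sqrtr_sqr; apply: ler_wsqrtr.
apply: (le_trans (y := \sum_(k < d) h ^+ 2)).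
  apply: ler_sum => k _; rewrite -real_normK ?num_real //.
  by rewrite lerXn2r ?nnegrE ?normr_ge0.
rewrite sumr_const card_ord exprMn -[h ^+ 2 *+ d]mulr_natl; apply: ler_wpM2r; first exact: sqr_ge0.
rewrite expr2 -natrM ler_nat; case: (d) => // m; by rewrite leq_pmull.
Qed.

Lemma edist_gt0 u v : u != v -> 0 < edist u v.
Proof.
move=> neq; rewrite /edist sqrtr_gt0.
have [k Hk] : exists k, u ord0 k != v ord0 k.
  apply/existsP; apply: contraR neq => /existsPn H; apply/eqP/matrixP => i j.
  by rewrite (ord1 i); apply/eqP; move: (H j); rewrite negbK.
rewrite (bigD1 k) //=; apply: ltr_pwDl.
  by rewrite lt_def sqr_ge0 andbT sqrf_eq0 subr_eq0.
by apply: sumr_ge0 => i _; exact: sqr_ge0.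
Qed.
End Edist.
Section Constr.
Variables (R : realType) (d n : nat) (P : 'I_n -> 'rV[R]_d) (s : R).

Definition nblk (e1 e2 : 'I_n * 'I_n) := ~~ blocks P s e1 e2.1 e2.2.

Lemma foldl_pw ord E : pairwise nblk E -> pairwise nblk (foldl (process P s) E ord).
Proof.
elim: ord E => [|pq ord IH] E //= HE; apply: IH.
rewrite /process; case: ifP => // /negbT Hn.
rewrite pairwise_rcons HE andbT; apply/allP => e He.
by apply: contra Hn => Hb; apply/hasP; exists e.
Qed.

Lemma foldl_all (Q : pred ('I_n * 'I_n)) ord E : all Q E -> all Q ord ->
  all Q (foldl (process P s) E ord).
Proof.
elim: ord E => [|pq ord IH] E //= HE /andP[Hpq Ho]; apply: IH => //.
by rewrite /process; case: ifP => // _; rewrite all_rcons Hpq HE.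
Qed.

Lemma pairwise_in (T : eqType) (r r' : rel T) (l : seq T) :
  (forall a b, a \in l -> b \in l -> r a b -> r' a b) -> pairwise r l -> pairwise r' l.
Proof.
elim: l => [|a l IH] //= H /andP[Ha Hl]; apply/andP; split.
  apply/allP => b Hb; apply: H; rewrite ?inE ?eqxx ?Hb ?orbT //.
  exact: (allP Ha).
by apply: IH => // u v Hu Hv; apply: H; rewrite inE ?Hu ?Hv orbT.
Qed.
End Constr.
Section Cell.
Variables (R : realType) (d : nat) (c : 'rV[R]_d) (h : R).
Hypothesis hh : 0 < h.

Definition cellarg (A : nat) (y : 'rV[R]_d) k := (y ord0 k - c ord0 k) / h + A%:R.
Definition cell (A : nat) (y : 'rV[R]_d) k := Num.truncn (cellarg A y k).

Lemma cell_bound A (y : 'rV[R]_d) k : `|y ord0 k - c ord0 k| <= A%:R * h ->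
  0 <= cellarg A y k /\ (cell A y k <= 2 * A)%N.
Proof.
move=> H; have := H; rewrite -ler_pdivrMr //.
rewrite -[h in _ / h](gtr0_norm hh) -normfV -normrM ler_norml => /andP[H1 H2].
rewrite /cell /cellarg; split; first by rewrite -lerBlDr sub0r.
rewrite truncn_le_nat -natr1 natrM -ltrBlDr.

lra.
Qed.

Lemma cell_close A (y z : 'rV[R]_d) k : `|y ord0 k - c ord0 k| <= A%:R * h ->
  `|z ord0 k - c ord0 k| <= A%:R * h ->
  (inord (cell A y k) : 'I_(2 * A).+1) = inord (cell A z k) ->
  `|y ord0 k - z ord0 k| <= h.
Proof.
move=> Hy Hz E.
have [Hy0 Hy1] := cell_bound Hy; have [Hz0 Hz1] := cell_bound Hz.
have : cell A y k = cell A z k.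
  by move/(congr1 (@nat_of_ord _)): E; rewrite !inordK // ltnS.
rewrite /cell => Ec.
have := truncn_itv Hy0; have := truncn_itv Hz0; rewrite Ec.
set t := (Num.truncn _)%:R; set t1 := ((Num.truncn _).+1)%:R.
have -> : t1 = t + 1 by rewrite /t1 /t -natr1.
move: Hy0 Hz0; rewrite /cellarg.
set a := (y ord0 k - c ord0 k) / h; set b := (z ord0 k - c ord0 k) / h.
move=> _ _ /andP[Hb1 Hb2] /andP[Ha1 Ha2].
have -> : y ord0 k - z ord0 k = (a - b) * h.
  by rewrite /a /b; field; rewrite gt_eqF.
rewrite normrM (gtr0_norm hh) -[X in _ <= X]mul1r ler_pM2r // ler_norml; apply/andP; split; lra.
Qed.
End Cell.
Section Class.
Variables (R : realType) (d n : nat) (P : 'I_n -> 'rV[R]_d) (s : R) (x : 'I_n) (L : R).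
Hypotheses (hd : (1 <= d)%N) (hs : 1 < s) (hL : 0 < L).

Let s2 := 2 * s + 2.
Let s2_gt0 : 0 < s2. Proof. by rewrite /s2 addr_gt0 // mulr_gt0 // (lt_trans ltr01 hs). Qed.
Let del := L / s2.
Let h := del / d%:R.
Let dpos : 0 < d%:R :> R. Proof. by rewrite ltr0n. Qed.
Let h_gt0 : 0 < h. Proof. by rewrite /h /del !divr_gt0. Qed.
Let dh : d%:R * h = del. Proof. by rewrite /h mulrC divfK // gt_eqF. Qed.

Definition rad (e : 'I_n * 'I_n) := edist (P e.1) (P e.2) / (2 * s + 2).
Definition orient (e : 'I_n * 'I_n) :=
  if edist (P x) (P e.1) <= rad e then e else (e.2, e.1).
Definition A1 := (2 * d)%N.
Definition A2 := (Num.truncn ((4 * s + 6) * d%:R)).+1.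
Definition cellT := ({ffun 'I_d -> 'I_(2 * A1).+1} * {ffun 'I_d -> 'I_(2 * A2).+1})%type.
Definition fcell (e : 'I_n * 'I_n) : cellT :=
  ([ffun k => inord (cell (P x) h A1 (P (orient e).1) k)],
   [ffun k => inord (cell (P x) h A2 (P (orient e).2) k)]).
Definition cls (e : 'I_n * 'I_n) :=
  [&& in_wspd_pair P s x e, L <= edist (P e.1) (P e.2) & edist (P e.1) (P e.2) < 2 * L].

Lemma orient_len e : edist (P (orient e).1) (P (orient e).2) = edist (P e.1) (P e.2).
Proof. by rewrite /orient; case: ifP => //= _; rewrite edistC. Qed.

Lemma orient_near e : in_wspd_pair P s x e -> edist (P x) (P (orient e).1) <= rad e.
Proof.
rewrite /in_wspd_pair /orient /rad; case: ifP => //= /negbT H /orP[] //.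
Qed.

Lemma cls_bounds e : cls e -> forall k,
  `|P (orient e).1 ord0 k - P x ord0 k| <= A1%:R * h /\
  `|P (orient e).2 ord0 k - P x ord0 k| <= A2%:R * h.
Proof.
case/and3P=> Hw HL1 HL2 k.
have Hn := orient_near Hw.
have Hr : rad e <= 2 * del.
  rewrite /rad /del mulrA ler_pM2r ?invr_gt0 //; exact: ltW.
have H1 : `|P (orient e).1 ord0 k - P x ord0 k| <= 2 * del.
  apply: le_trans (coord_le _ _ _) _; rewrite edistC; exact: le_trans Hn Hr.
split.
  by rewrite /A1 natrM -mulrA dh.
have H2 : `|P (orient e).2 ord0 k - P (orient e).1 ord0 k| <= 2 * L.
  by apply: le_trans (coord_le _ _ _) _; rewrite edistC orient_len ltW.
have H3 : `|P (orient e).2 ord0 k - P x ord0 k| <= 2 * L + 2 * del.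
  rewrite -[_ - P x ord0 k](subrKA (P (orient e).1 ord0 k)).
  by apply: le_trans (ler_normD _ _) _; apply: lerD.
apply: le_trans H3 _.
have -> : 2 * L + 2 * del = (4 * s + 6) * d%:R * h.
  rewrite -mulrA dh /del; have := s2_gt0; rewrite /s2 => H0; field; rewrite gt_eqF //.
rewrite ler_pM2r //; apply: ltW; exact: truncnS_gt.
Qed.

Lemma fcell_blocks a b : cls a -> cls b -> fcell a = fcell b -> blocks P s a b.1 b.2.
Proof.
move=> Ha Hb E.
have [E1 E2] : (forall k, (inord (cell (P x) h A1 (P (orient a).1) k) : 'I_(2 * A1).+1)
                  = inord (cell (P x) h A1 (P (orient b).1) k)) /\
               (forall k, (inord (cell (P x) h A2 (P (orient a).2) k) : 'I_(2 * A2).+1)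
                  = inord (cell (P x) h A2 (P (orient b).2) k)).
  case: E => E1 E2; split => k.
    by move/ffunP/(_ k): E1; rewrite !ffunE.
  by move/ffunP/(_ k): E2; rewrite !ffunE.
have N1 : edist (P (orient b).1) (P (orient a).1) <= del.
  rewrite -dh; apply: edist_le_cell; first exact: ltW.
  move=> k; have [Ba _] := cls_bounds Ha k; have [Bb _] := cls_bounds Hb k.
  exact: (cell_close h_gt0 Bb Ba (esym (E1 k))).
have N2 : edist (P (orient b).2) (P (orient a).2) <= del.
  rewrite -dh; apply: edist_le_cell; first exact: ltW.
  move=> k; have [_ Ba] := cls_bounds Ha k; have [_ Bb] := cls_bounds Hb k.
  exact: (cell_close h_gt0 Bb Ba (esym (E2 k))).
have Hdr : del <= rad a.
  case/and3P: Ha => _ HL1 _.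
  have := s2_gt0; rewrite /rad /del /s2 => H0.
  by rewrite ler_pM2r ?invr_gt0.
move: (le_trans N1 Hdr) (le_trans N2 Hdr); rewrite /blocks /rad /orient /=.
by case: ifP => _; case: ifP => _ /= -> ->; rewrite ?orbT.
Qed.

Lemma cls_count G : pairwise (nblk P s) G -> (count cls G <= #|{: cellT}|)%N.
Proof.
move=> Hpw.
have Hu : uniq (map fcell (filter cls G)).
  rewrite uniq_pairwise pairwise_map.
  apply: (pairwise_in (r := nblk P s)); last exact: pairwise_filter.
  move=> a b; rewrite !mem_filter => /andP[Ha _] /andP[Hb _] Hab /=.
  by apply: contra Hab => /eqP E; exact: fcell_blocks.
move/card_uniqP: Hu => Hu.
rewrite -size_filter -(size_map fcell) -Hu; exact: max_card.
Qed.

Lemma cls_count_real G : pairwise (nblk P s) G ->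
  (count cls G)%:R <= ((4 * d + 1) ^ d * (23 * d) ^ d)%:R * s ^+ d.
Proof.
move=> /cls_count H.
rewrite card_prod !card_ffun !card_ord in H.
apply: (le_trans (y := (((2 * A1).+1 ^ d * (2 * A2).+1 ^ d)%N)%:R)); first by rewrite ler_nat.
have -> : (2 * A1).+1 = (4 * d + 1)%N by rewrite /A1 mulnA addn1.
rewrite !natrM !natrX -mulrA; apply: ler_wpM2l; first exact: exprn_ge0.
have s0 : 0 <= s by exact: ltW (lt_trans ltr01 hs).
rewrite -exprMn; apply: lerXn2r; rewrite ?nnegrE ?mulr_ge0 //.
have HA : A2%:R <= (4 * s + 6) * d%:R + 1.
  rewrite /A2 -natr1 lerD2r truncn_le; apply: mulr_ge0 => //; lra.
have HD : 1 <= d%:R :> R by rewrite ler1n.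
have HDs : d%:R <= d%:R * s :> R by rewrite ler_peMr ?ltW // (le_trans ler01 HD).
rewrite -natr1 natrM !natrM; nra.
Qed.
End Class.
Lemma pow2_split (R : realType) (K : nat) (t : R) : 1 <= t -> t < 2 ^+ K.+1 ->
  exists k, (k <= K)%N /\ 2 ^+ k <= t < 2 ^+ k.+1.
Proof.
elim: K => [|K IH] H1 H2; first by exists 0%N; rewrite expr0 H1.
have [Hlt|Hge] := ltP t (2 ^+ K.+1).
  by have [k [Hk Hk']] := IH H1 Hlt; exists k; split => //; apply: leqW.
by exists K.+1; split => //; rewrite Hge.
Qed.

Lemma count_split (T : Type) (K : nat) (a : pred T) (b : 'I_K -> pred T) (l : seq T) :
  (forall e, a e -> exists k, b k e) ->
  (count a l <= \sum_(k < K) count (b k) l)%N.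
Proof.
move=> H; elim: l => [|e l IH] /=; first by rewrite big1.
rewrite big_split /=; apply: leq_add => //.
case Ha: (a e) => //; have [k Hk] := H e Ha.
by rewrite (bigD1 k) //= Hk.
Qed.

Theorem theorem14 :
  forall d : nat, (1 <= d)%N ->
  exists C : nat,
  forall (R : realType) (n : nat) (P : 'I_n -> 'rV[R]_d) (s : R)
         (ord : seq ('I_n * 'I_n)),
    (2 <= n)%N -> injective P -> 1 < s ->
    perm_eq ord (all_ordered_pairs n) ->
    forall x : 'I_n,
      (count (in_wspd_pair P s x) (uncoord_graph P s ord))%:R
        <= C%:R * s ^+ d * (1 + lg (aspect_ratio P)).
Proof.
move=> d hd; exists ((4 * d + 1) ^ d * (23 * d) ^ d)%N.
move=> R n P s ord hn Pinj hs Hperm x.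
set G := uncoord_graph P s ord.
have Hpw : pairwise (nblk P s) G by exact: foldl_pw.
have Hdist : all (fun e : 'I_n * 'I_n => e.1 != e.2) G.
  apply: foldl_all => //; apply/allP => e He.
  by move: He; rewrite (perm_mem Hperm) mem_filter => /andP[].
set m := mindist P; set M := maxdist P.
have HM : forall i j, edist (P i) (P j) <= M.
  move=> i j.
  apply: le_trans _ (le_bigmax _ (fun i => \big[Num.max/0]_(j < n) edist (P i) (P j)) i).
  exact: (le_bigmax _ (fun j => edist (P i) (P j)) j).
have Hm : forall i j, i != j -> m <= edist (P i) (P j).
  move=> i j Hij.
  apply: le_trans (bigmin_le _ i (fun i => \big[Num.min/maxdist P]_(j < n | j != i) edist (P i) (P j))) _.
  by apply: (bigmin_le_cond _ (P := fun j => j != i)); rewrite eq_sym.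
have Hpos : forall i j, i != j -> 0 < edist (P i) (P j).
  by move=> i j Hij; apply: edist_gt0; apply: contra Hij => /eqP /Pinj ->.
pose i0 : 'I_n := Ordinal (ltn_trans (ltnSn 0) hn).
pose i1 : 'I_n := Ordinal hn.
have Hi01 : i0 != i1 by [].
have M_gt0 : 0 < M by apply: lt_le_trans (Hpos _ _ Hi01) (HM _ _).
have m_gt0 : 0 < m.
  apply: lt_bigmin => // i _; apply: lt_bigmin => // j Hj.
  by apply: Hpos; rewrite eq_sym.
have mM : m <= M by apply: le_trans (Hm _ _ Hi01) (HM _ _).
set al := aspect_ratio P.
have al_ge1 : 1 <= al by rewrite /al /aspect_ratio -/m -/M ler_pdivlMr // mul1r.
have al_gt0 : 0 < al by apply: lt_le_trans ltr01 al_ge1.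
have two : (0:R) < 2 by lra.
have ln2 : 0 < ln (2 : R) by apply: ln_gt0; lra.
have lg_ge0 : 0 <= lg al by rewrite /lg divr_ge0 ?(ltW ln2) // ln_ge0.
set K := Num.truncn (lg al).
have al_lt : al < 2 ^+ K.+1.
  have H := truncnS_gt (lg al); rewrite -/K /lg ltr_pdivrMr // in H.
  have H2 : 0 < (2 : R) ^+ K.+1 by rewrite exprn_gt0.
  rewrite -(ltr_ln al_gt0 H2) lnXn //.
  by rewrite -[ln _ *+ _]mulr_natl.
pose b (k : 'I_K.+1) := cls P s x (m * 2 ^+ k).
have Hcnt : (count (in_wspd_pair P s x) G <= \sum_(k < K.+1) count (b k) G)%N.
  rewrite -(eq_in_count (a1 := fun e => in_wspd_pair P s x e && (e.1 != e.2))); last first.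
    by move=> e He /=; rewrite (allP Hdist e He) andbT.
  apply: count_split => e /andP[Hw He].
  have He0 := Hpos _ _ He.
  have Ht1 : 1 <= edist (P e.1) (P e.2) / m by rewrite ler_pdivlMr // mul1r Hm.
  have Ht2 : edist (P e.1) (P e.2) / m < 2 ^+ K.+1.
    apply: le_lt_trans al_lt; rewrite /al /aspect_ratio -/m -/M.
    by rewrite ler_pM2r ?invr_gt0.
  have [k [Hk /andP[Hk1 Hk2]]] := pow2_split Ht1 Ht2.
  exists (@Ordinal K.+1 k Hk); rewrite /b /cls /= Hw /=.
  rewrite -ler_pdivlMl // mulrC Hk1 /=.
  suff -> : 2 * (m * 2 ^+ k) = 2 ^+ k.+1 * m by rewrite -ltr_pdivrMr.
  by rewrite exprS; ring.
have H1 : (count (in_wspd_pair P s x) G)%:R <= (\sum_(k < K.+1) count (b k) G)%:R :> R.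
  by rewrite ler_nat.
apply: le_trans H1 _.
rewrite natr_sum.
have H3 : \sum_(k < K.+1) (count (b k) G)%:R <= \sum_(k < K.+1) (((4 * d + 1) ^ d * (23 * d) ^ d)%N%:R * s ^+ d) :> R.
  apply: ler_sum => k _; apply: cls_count_real => //.
  by rewrite mulr_gt0 // exprn_gt0.
apply: le_trans H3 _.
rewrite sumr_const card_ord -[_ *+ K.+1]mulr_natr; apply: ler_wpM2l.
  by rewrite mulr_ge0 // exprn_ge0 // ltW // (lt_trans ltr01 hs).
rewrite -natr1 addrC lerD2l; rewrite /K truncn_le //.
Qed.
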